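(* Let $g>0$, let $F:\mathbb{R}\to\mathbb{R}$ be continuously differentiable with $F(0)=F(a)=F(1)=0$ for some $a\in\,]0,1[$, $F>0$ on $(-\infty,0[\,\cup\,]a,1[$ and $F<0$ on $]0,a[\,\cup\,]1,+\infty)$. Let $\beta>0$, let $n:\mathbb{R}\to\mathbb{R}^+$ be $\beta$-periodic and locally integrable, and let $F_0$ be the modification of $F$ described in the context. Consider the planar system \[\dot x=y,\qquad \dot y=-h(t,x),\qquad h(t,s)=-g s+n(t)F_0(s),\] and let $m\ge1$ be an integer. Then there is $R_0=R_0(m,|n|_1)>0$ such that for each initial point $z_2\in\mathbb{R}^2$ with $\|z_2\|\ge R_0$ and each $q_0\in\mathbb{R}^2$ with $\|q_0\|\le1$, the rotation number $\mathrm{rot}_m(z_2,q_0)$ is defined and \[\mathrm{rot}_m(z_2,q_0)<1.\]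
   Context: Let $\delta(s)=\max\{0,\min\{s,1\}\}$, $\ell(s)=\exp(1/s)$ for $s<0$, $\ell(s)=0$ for $0\le s\le1$, $\ell(s)=-\exp(1/(1-s))$ for $s>1$, $c_0=\max_{s\in[0,1]}|F(s)|$, and fix $0<k_0\le c_0$. Set $F_0(s)=F(\delta(s))+k_0\ell(s)$; this is a bounded, globally Lipschitz function equal to $F$ on $[0,1]$. Then every solution of the system is defined on all of $\mathbb{R}$ and unique given initial data; write $\zeta(t,0,z_0)=(x(t),y(t))$ for the solution with $\zeta(0)=z_0$. $|n|_1=\int_0^\beta n(t)\,dt$; the constant $R_0$ depends on $m$ and $|n|_1$ (given the fixed data $g,F,k_0,\beta$). For $q_0\in\mathbb{R}^2$ and $z_0$ with $\zeta(t,0,z_0)\ne q_0$ for all $t\in[0,m\beta]$, write $\zeta(t,0,z_0)-q_0=\rho(t)(\cos\theta(t),\sin\theta(t))$ with $\rho>0$ and $\theta$ continuous; the rotation number is $\mathrm{rot}_m(z_0,q_0)=\frac{\theta(0)-\theta(m\beta)}{2\pi}$, i.e. the normalized clockwise angular displacement of the solution around $q_0$ over $[0,m\beta]$. *)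

(* Defs.v *)
From HB Require Import structures.
From mathcomp Require Import all_boot all_order all_algebra.
From mathcomp Require Import all_classical all_reals all_analysis.
Set Implicit Arguments. Unset Strict Implicit. Unset Printing Implicit Defensive.
Import Order.TTheory GRing.Theory Num.Theory.
Import numFieldNormedType.Exports.
Local Open Scope classical_set_scope.
Local Open Scope ring_scope.

Section Defs.
Variable R : realType.

Definition delta (s : R) : R := Num.max 0 (Num.min s 1).

Definition ell (s : R) : R :=
  if s < 0 then expR (s^-1) else if s <= 1 then 0 else - expR ((1 - s)^-1).

(* c0 = max_{s in [0,1]} |F(s)|  (written as a sup, attained for continuous F) *)
Definition c0 (F : R -> R) : R := sup [set `|F s| | s in `[0, 1]].

Definition F0 (F : R -> R) (k0 : R) (s : R) : R := F (delta s) + k0 * ell s.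

Definition hfun (g : R) (n : R -> R) (F : R -> R) (k0 : R) (t s : R) : R :=
  - g * s + n t * F0 F k0 s.

Definition oint (f : R -> R) (t : R) : R :=
  if 0 <= t then Rintegral lebesgue_measure `[0, t] f
  else - Rintegral lebesgue_measure `[t, 0] f.

(* Caratheodory solution on all of R of  x' = y, y' = - h(t,x),
   i.e. zeta = (x,y) is continuous, the right-hand sides are locally
   integrable along zeta, and zeta(t) = zeta(0) + int_0^t (rhs). *)
Definition is_solution (g : R) (n : R -> R) (F : R -> R) (k0 : R)
    (zeta : R -> R * R) : Prop :=
  let x := fun t => (zeta t).1 in
  let y := fun t => (zeta t).2 in
  let rhs := fun t => - hfun g n F k0 t (x t) in
  continuous x /\ continuous y /\
  (forall a b : R, lebesgue_measure.-integrable `[a, b] (fun t => (y t)%:E)) /\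
  (forall a b : R, lebesgue_measure.-integrable `[a, b] (fun t => (rhs t)%:E)) /\
  (forall t, x t = x 0 + oint y t) /\
  (forall t, y t = y 0 + oint rhs t).

Definition norm2 (z : R * R) : R := Num.sqrt (z.1 ^+ 2 + z.2 ^+ 2).

Definition is_angle_lift (zeta : R -> R * R) (q0 : R * R) (T : R)
    (rho theta : R -> R) : Prop :=
  {within `[0, T], continuous theta} /\
  forall t, t \in `[0, T] ->
    0 < rho t /\
    (zeta t).1 - q0.1 = rho t * cos (theta t) /\
    (zeta t).2 - q0.2 = rho t * sin (theta t).

Definition rot_of (theta : R -> R) (T : R) : R :=
  (theta 0 - theta T) / (2 * pi).

End Defs.

(* Main.v *)
Require Import Defs.
From HB Require Import structures.
From mathcomp Require Import all_boot all_order all_algebra.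
From mathcomp Require Import all_classical all_reals all_analysis.
From mathcomp Require Import lra ring.
Import Order.TTheory GRing.Theory Num.Theory.
Import numFieldNormedType.Exports.
Local Open Scope classical_set_scope.
Local Open Scope ring_scope.

Lemma andP_intro {a b : bool} : a -> b -> a && b.
Proof. by move=> -> ->. Qed.

Lemma mshift (R : realType) (h : R) :
  measurable_fun [set: measurableTypeR R] (fun x : R => x + h).
Proof. by apply: measurable_realfun.measurable_funD => //; exact: measurable_cst. Qed.

Definition shiftm (R : realType) (h : R) : set (measurableTypeR R) -> \bar R :=
  pushforward (@lebesgue_measure R) (fun x => x + h).

Section shiftm.
Local Open Scope ereal_scope.
Variables (R : realType) (h : R).

Let shiftm0 : @shiftm R h set0 = 0%E.
Proof. by rewrite /shiftm /pushforward preimage_set0 measure0. Qed.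

Let shiftm_ge0 A : 0 <= @shiftm R h A.
Proof. rewrite /shiftm /pushforward; exact: measure_ge0. Qed.

Let shiftm_sigma_additive : semi_sigma_additive (@shiftm R h).
Proof.
move=> F mF tF mUF; rewrite /shiftm /pushforward preimage_bigcup.
apply: measure_semi_sigma_additive.
- by move=> n; rewrite -[X in measurable X]setTI; apply: mshift => //; exact: mF.
- apply/trivIsetP => /= i j _ _ ij; rewrite -preimage_setI.
  by move/trivIsetP : tF => /(_ _ _ _ _ ij) ->//; rewrite preimage_set0.
- by rewrite -preimage_bigcup -[X in measurable X]setTI; apply: mshift => //; exact: bigcupT_measurable.
Qed.

HB.instance Definition _ := isMeasure.Build _ _ _
  (@shiftm R h) shiftm0 shiftm_ge0 shiftm_sigma_additive.
End shiftm.

Section Aux.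
Variable R : realType.
Notation mu := (@lebesgue_measure R).


Lemma barrier (v : R -> R) (a b Y : R) : continuous v -> Y < v a ->
  (forall t, a <= t <= b -> (forall s, a <= s <= t -> Y <= v s) -> Y < v t) ->
  forall t, a <= t <= b -> Y < v t.
Proof.
move=> cv va H t1 /andP[at1 t1b]; rewrite ltNge; apply/negP => vt1.
pose S := [set s | a <= s <= b /\ v s <= Y].
have S0 : S !=set0 by exists t1; split => //; apply/andP.
have lbS : lbound S a by move=> s [/andP[] ].
have hlS : has_lbound S by exists a.
set i := inf S.
have ai : a <= i by apply: lb_le_inf.
have it1 : i <= t1 by apply: ge_inf => //; split => //; apply/andP.
have Hlt : forall s, a <= s -> s < i -> Y < v s.
  move=> s a_s si; rewrite ltNge; apply/negP => vs.
  have : i <= s by apply: ge_inf => //; split => //; apply/andP; split => //;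
    apply: (le_trans (ltW si)); apply: (le_trans it1).
  by rewrite leNgt si.
have vi : Y <= v i.
  rewrite leNgt; apply/negP => vi.
  have ai' : a <= i by [].
  have := @IVT R v a i Y ai' (continuous_subspaceT cv).
  case.
    rewrite ge_min le_max (ltW vi) /=. by rewrite orbT (ltW va).
  move=> c; rewrite in_itv /= => /andP[ac ci] vc.
  have : c != i by apply/eqP => ci'; move: vi; rewrite -ci' vc ltxx.
  rewrite neq_lt => /orP[ci2|]; last by rewrite ltNge ci.
  by have := Hlt c ac ci2; rewrite vc ltxx.
have Yvi : Y < v i.
  apply: H; first by rewrite ai /= (le_trans it1).
  move=> s /andP[a_s si]; move: si; rewrite le_eqVlt => /orP[/eqP -> //|si].
  exact/ltW/Hlt.
have := cvgr_gt (v i) (cv i) Y Yvi.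
move=> Hn; have [e /= e0 He] := (nbhs_ballP _ _).1 (Hn _).
have [s Ss sie] := inf_adherent e0 (conj S0 hlS).
have is_ : i <= s by apply: ge_inf.
have : Y < v s.
  apply: He; rewrite /ball /= distrC ger0_norm ?subr_ge0 //.
  by rewrite ltrBlDl.
by case: Ss => _ vs /(le_lt_trans vs); rewrite ltxx.
Qed.


Lemma cont_int (f : R -> R) s t : continuous f ->
  mu.-integrable `[s, t] (EFin \o f).
Proof.
move=> cf; apply: continuous_compact_integrable; first exact: segment_compact.
exact: continuous_subspaceT.
Qed.

Lemma int_sub (f : R -> R) a b s t : a <= s -> t <= b ->
  mu.-integrable `[a, b] (EFin \o f) -> mu.-integrable `]s, t] (EFin \o f).
Proof.
move=> as_ tb; apply: integrableS => //.
move=> x /=; rewrite !in_itv /= => /andP[sx xt].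
by rewrite (le_trans as_ (ltW sx)) (le_trans xt tb).
Qed.

Lemma int_sub' (f : R -> R) a b :
  mu.-integrable `[a, b] (EFin \o f) -> mu.-integrable `]a, b] (EFin \o f).
Proof. exact: int_sub. Qed.

Lemma Rint_split (f : R -> R) s t : 0 <= s <= t ->
  mu.-integrable `[0, t] (EFin \o f) ->
  Rintegral mu `[0, t] f - Rintegral mu `[0, s] f = Rintegral mu `]s, t] f.
Proof.
move=> /andP[s0 st] itf.
by rewrite (@Rintegral_itvB R f (BLeft 0) (BRight t) s) // bnd_simp.
Qed.

Lemma Rint_lin (f : R -> R) s t (al be : R) : s <= t ->
  mu.-integrable `]s, t] (EFin \o f) ->
  Rintegral mu `]s, t] (fun x => al + be * f x) =
  al * (t - s) + be * Rintegral mu `]s, t] f.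
Proof.
move=> st itf.
rewrite RintegralD //; last 2 first.
- apply: (@int_sub (cst al) s t) => //; exact/cont_int/cst_continuous.
- apply: eq_integrable (integrableZl _ be itf) => //= x _; by rewrite EFinM.
rewrite RintegralZl // Rintegral_cst //.
congr (_ * _ + _).
have := @lebesgue_measure_itv R `]s, t]; rewrite /= lte_fin => ->.
move: st; rewrite le_eqVlt => /orP[/eqP->|->]; by rewrite ?ltxx ?subrr.
Qed.


Lemma int_lin (f : R -> R) s t (al be : R) :
  mu.-integrable `]s, t] (EFin \o f) ->
  mu.-integrable `]s, t] (EFin \o (fun x => al + be * f x)).
Proof.
move=> itf.
have A := @int_sub (cst al) s t s t (lexx _) (lexx _) (@cont_int (cst al) s t (@cst_continuous _ _ al)).
have B : mu.-integrable `]s,t] (fun x => (be%:E * (EFin \o f) x)%E) by apply: integrableZl.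
have C : mu.-integrable `]s,t] ((EFin \o cst al) \+ (fun x => (be%:E * (EFin \o f) x)%E)).
  by apply: integrableD.
by apply: eq_integrable C => //= x _; rewrite EFinD EFinM.
Qed.

Lemma growth (v f n : R -> R) (T M NN Y : R) :
  continuous v -> 0 <= M -> 0 <= NN -> 0 <= Y ->
  (forall s t, mu.-integrable `]s, t] (EFin \o f)) ->
  (forall s t, mu.-integrable `]s, t] (EFin \o n)) ->
  (forall t, 0 <= t <= T -> v t - v 0 = Rintegral mu `]0, t] f) ->
  (forall t, 0 <= t <= T -> Rintegral mu `]0, t] n <= NN) ->
  (forall t, 0 <= v t -> - (M * n t) <= f t) ->
  Y + M * NN < v 0 ->
  forall t, 0 <= t <= T -> Y < v t.
Proof.
move=> cv M0 N0 Y0 intf intn inc Nb hf v0 t ht.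
apply: (@barrier v 0 T Y cv _ _ t ht).
  apply: (le_lt_trans _ v0); rewrite lerDl mulr_ge0 //.
move=> u hu Hu; have /andP[u0 uT] := hu.
have h1 : Rintegral mu `]0, u] (fun x => 0 + (- M) * n x) <= Rintegral mu `]0, u] f.
  apply: le_Rintegral => //; first exact: int_lin.
  move=> x /=; rewrite in_itv /= => /andP[x0 xu].
  rewrite add0r mulNr; apply: hf; apply: le_trans Y0 _; apply: Hu.
  by rewrite (ltW x0) xu.
rewrite Rint_lin // mul0r add0r in h1.
have h2 := Nb u hu.
have h3 := inc u hu.
nra.
Qed.

Lemma decay_step (v f n : R -> R) (T M NN c d s : R) :
  continuous v -> 0 <= M -> 0 <= NN -> 0 <= c -> c * d <= 1/2 -> 0 <= s -> s + d <= T ->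
  (forall s t, mu.-integrable `]s, t] (EFin \o f)) ->
  (forall s t, mu.-integrable `]s, t] (EFin \o n)) ->
  (forall s t, 0 <= s <= t -> t <= T -> v t - v s = Rintegral mu `]s, t] f) ->
  (forall s t, 0 <= s <= t -> t <= T -> Rintegral mu `]s, t] n <= NN) ->
  (forall t, 0 <= v t -> f t <= M * n t) ->
  (forall t, - (c * v t) - M * n t <= f t) ->
  4 * (M * NN) + 2 <= v s ->
  forall t, s <= t <= s + d -> (v s - (4 * (M * NN) + 2)) / 2 < v t.
Proof.
move=> cv M0 N0 c0 cd s0 sdT intf intn inc Nb hf1 hf2 Xge t ht.
set K := M * NN in Xge *.
have K0 : 0 <= K by rewrite mulr_ge0.
apply: (@barrier v s (s + d) _ cv _ _ t ht); first by lra.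
move=> u hu Hu; have /andP[su udT] := hu.
have Y0 : 0 <= (v s - (4 * K + 2)) / 2 by lra.
have bnd : forall x, s < x <= u -> v x <= v s + K.
  move=> x /andP[sx xu].
  have hx : 0 <= s <= x by rewrite s0 ltW.
  have xT : x <= T by lra.
  have e1 := inc s x hx xT.
  have e2 := Nb s x hx xT.
  have e3 : Rintegral mu `]s, x] f <= Rintegral mu `]s, x] (fun y => 0 + M * n y).
    apply: le_Rintegral => //; first exact: int_lin.
    move=> y /=; rewrite in_itv /= => /andP[sy yx].
    rewrite add0r; apply: hf1; apply: le_trans Y0 _; apply: Hu.
    by rewrite (ltW sy) (le_trans yx xu).
  rewrite (@Rint_lin n s x 0 M (ltW sx) (intn s x)) mul0r add0r in e3.
  have e4 : M * Rintegral mu `]s, x] n <= K by rewrite /K ler_wpM2l.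
  lra.
have hsu : 0 <= s <= u by rewrite s0 su.
have uT : u <= T by lra.
have e1 := inc s u hsu uT.
have e2 := Nb s u hsu uT.
have e3 : Rintegral mu `]s, u] (fun y => - (c * (v s + K)) + (- M) * n y) <= Rintegral mu `]s, u] f.
  apply: le_Rintegral => //; first exact: int_lin.
  move=> y /=; rewrite in_itv /= => /andP[sy yu].
  apply: le_trans (hf2 y); rewrite mulNr lerD2r lerN2 ler_wpM2l //.
  by apply: bnd; rewrite sy yu.
rewrite (@Rint_lin n s u (- (c * (v s + K))) (- M) su (intn s u)) in e3.
have e4 : M * Rintegral mu `]s, u] n <= K by rewrite /K ler_wpM2l.
have e5 : c * (u - s) <= 1/2 by apply: le_trans cd; rewrite ler_wpM2l //; lra.
have e6 : c * (v s + K) * (u - s) <= (v s + K) / 2.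
  have hK : 0 <= v s + K by lra.
  nra.
lra.
Qed.

Lemma divX2S (x : R) k : x / 2 ^+ k.+1 = (x / 2 ^+ k) / 2.
Proof. by rewrite exprSr invfM mulrA. Qed.

Lemma decay (v f n : R -> R) (T M NN c W : R) (N : nat) :
  continuous v -> 0 <= M -> 0 <= NN -> 0 <= c -> 0 < T -> (0 < N)%N ->
  c * (T / N%:R) <= 1/2 ->
  (forall s t, mu.-integrable `]s, t] (EFin \o f)) ->
  (forall s t, mu.-integrable `]s, t] (EFin \o n)) ->
  (forall s t, 0 <= s <= t -> t <= T -> v t - v s = Rintegral mu `]s, t] f) ->
  (forall s t, 0 <= s <= t -> t <= T -> Rintegral mu `]s, t] n <= NN) ->
  (forall t, 0 <= v t -> f t <= M * n t) ->
  (forall t, - (c * v t) - M * n t <= f t) ->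
  0 <= W ->
  2 ^+ N * (W + (4 * (M * NN) + 2)) - (4 * (M * NN) + 2) <= v 0 ->
  forall t, 0 <= t <= T -> W <= v t.
Proof.
move=> cv M0 N0 c0 T0 N0' cd intf intn inc Nb hf1 hf2 W0.
set C := 4 * (M * NN) + 2 => v0.
have C0 : 0 <= C by rewrite /C; have := mulr_ge0 M0 N0; lra.
set d := T / N%:R.
have Nr0 : 0 < N%:R :> R by rewrite ltr0n.
have d0 : 0 <= d by rewrite /d divr_ge0 // ?ltW.
have Nd : N%:R * d = T by rewrite /d mulrC -mulrA mulVf ?mulr1 // gt_eqF.
have p2 : forall k, 0 < 2 ^+ k :> R by move=> k; rewrite exprn_gt0.
have WC : 0 <= W + C by lra.
have v0C : 0 <= v 0 + C.
  have : 0 <= 2 ^+ N * (W + C) by rewrite mulr_ge0 // ltW.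
  lra.
have claim : forall k, (k <= N)%N -> forall t, 0 <= t <= k%:R * d ->
    (v 0 + C) / 2 ^+ k - C <= v t.
  elim => [_ t|k IH kN t].
    rewrite mul0r => /andP[t0 t0']; have -> : t = 0 by apply/le_anti; rewrite t0 t0'.
    by rewrite expr0 divr1 addrK.
  have kN' : (k <= N)%N by apply: ltnW.
  have hk : 2 * (W + C) <= (v 0 + C) / 2 ^+ k.
    rewrite ler_pdivlMr //.
    have -> : 2 * (W + C) * 2 ^+ k = (W + C) * 2 ^+ k.+1 by rewrite exprS; ring.
    have e1 : 2 ^+ k.+1 <= 2 ^+ N :> R by apply: (ler_weXn2l _ kN); lra.
    have e2 := ler_wpM2l WC e1.
    lra.
  have IHk := IH kN'.
  have hkd0 : 0 <= k%:R * d by rewrite mulr_ge0.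
  have vkd := IHk (k%:R * d) (andP_intro hkd0 (lexx _)).
  move=> /andP[t0 tk1].
  have [tk|tk] := leP t (k%:R * d).
    have := IHk t (andP_intro t0 tk).
    rewrite divX2S; lra.
  have ekd : k%:R * d + d = k.+1%:R * d by rewrite -natr1 mulrDl mul1r.
  have sdT : k%:R * d + d <= T by rewrite ekd -Nd ler_wpM2r // ler_nat.
  have tk1' : t <= k%:R * d + d by rewrite ekd.
  have hCv : C <= v (k%:R * d) by lra.
  have := @decay_step v f n T M NN c d (k%:R * d) cv M0 N0 c0 cd hkd0 sdT intf intn inc Nb hf1 hf2 hCv t.
  rewrite (ltW tk) tk1' => /(_ isT) st.
  rewrite -/C in st; rewrite divX2S; lra.
move=> t /andP[t0 tT].
have := claim N (leqnn N) t; rewrite Nd t0 tT => /(_ isT) h.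
have : W + C <= (v 0 + C) / 2 ^+ N by rewrite ler_pdivlMr //; lra.
lra.
Qed.



Lemma trig_int (p : R) (z : int) :
  cos (p + z%:~R * (pi *+ 2)) = cos p /\ sin (p + z%:~R * (pi *+ 2)) = sin p.
Proof.
case: z => n.
  rewrite pmulrn mulr_natl (periodicn (@cosD2pi R)) (periodicn (@sinD2pi R)).
  by [].
rewrite NegzE mulrNz mulNr.
set q := p - _.
have -> : p = q + (pi *+ 2) *+ n.+1 by rewrite /q pmulrn mulr_natl subrK.
by rewrite (periodicn (@cosD2pi R)) (periodicn (@sinD2pi R)).
Qed.

Lemma rot_lt1 (zeta : R -> R * R) (q0 : R * R) (T : R) (rho theta : R -> R) (p : R) :
  0 <= T ->
  (forall t r, t \in `[0, T] -> 0 < r ->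
     ~ ((zeta t).1 - q0.1 = r * cos p /\ (zeta t).2 - q0.2 = r * sin p)) ->
  is_angle_lift zeta q0 T rho theta -> rot_of theta T < 1.
Proof.
move=> T0 Hray [ct Hl].
have e2 : 2 * pi = pi *+ 2 :> R by rewrite mulr_natl.
have e0 : 0 < pi *+ 2 :> R by rewrite -e2 mulr_gt0 // pi_gt0.
rewrite /rot_of e2 ltr_pdivrMr // mul1r.
rewrite ltNge; apply/negP => H.
set x := (theta 0 - p) / (pi *+ 2).
have f1 := Rfloor_le x.
have f2 := lt_succ_Rfloor x.
have [z hz] : exists z : int, Rfloor x = z%:~R by exists (Num.floor x); rewrite RfloorE.
set psi := p + z%:~R * (pi *+ 2).
have h1 : z%:~R * (pi *+ 2) <= theta 0 - p by rewrite -ler_pdivlMr // -hz.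
have h2 : theta 0 - p < (z%:~R + 1) * (pi *+ 2) by rewrite -ltr_pdivrMr // -hz.
have [c hc thc] : exists2 c, c \in `[0, T] & theta c = psi.
  apply: IVT => //.
  rewrite ge_min le_max; apply/andP; split; apply/orP; [right|left]; rewrite /psi; lra.
have [r0 [E1 E2]] := Hl c hc.
apply: (Hray c (rho c) hc r0).
by rewrite E1 E2 thc /psi; have [-> ->] := trig_int p z.
Qed.



Lemma preim_shift (a b h : R) :
  (fun x => x + h) @^-1` [set` `]a + h, b + h]] = [set` `]a, b]].
Proof.
by apply/seteqP; split => x /=; rewrite !in_itv /= ltrD2r lerD2r.
Qed.

Lemma Rint_shift (f : R -> R) (h a b : R) : (forall x, 0 <= f x) ->
  mu.-integrable `]a + h, b + h] (EFin \o f) ->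
  Rintegral mu `]a + h, b + h] f = Rintegral mu `]a, b] (fun x => f (x + h)).
Proof.
move=> f0 itf.
have mphi := @mshift R h.
set pm := @shiftm R h.
have eqm : forall A, measurable A -> mu A = pm A.
  apply: (@lebesgue_measure_unique R pm) => X [[x1 x2] _ <-].
  rewrite /pm /shiftm /pushforward /=.
  transitivity (mu ((fun x => x + h) @^-1` [set` `]x1, x2]])); last by [].
  have -> : (fun x => x + h) @^-1` [set` `]x1, x2]] = [set` `](x1 - h), (x2 - h)]].
    by apply/seteqP; split => x /=; rewrite !in_itv /= ltrBlDr lerBrDr.
  rewrite !lebesgue_measure_itv /= !lte_fin ltrD2r.
  by case: ifPn => // _; congr (_%:E); ring.
rewrite /Rintegral; congr fine.
rewrite (eq_measure_integral pm) ; last by move=> A mA _; exact: eqm.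
rewrite /pm /shiftm ge0_integral_pushforward //.
- by rewrite preim_shift.
- by case/integrableP : itf.
- by move=> y _; rewrite lee_fin.
Qed.

Lemma n_per (n : R -> R) (be : R) : (forall t, n (t + be) = n t) ->
  forall (k : nat) x, n (x + k%:R * be) = n x.
Proof.
move=> hp; elim=> [|k IH] x; first by rewrite mul0r addr0.
by rewrite -natr1 mulrDl mul1r addrA hp IH.
Qed.

Lemma Rint_period (n : R -> R) (be L : R) (k : nat) :
  (forall t, 0 <= n t) -> (forall t, n (t + be) = n t) ->
  (forall u v : R, mu.-integrable `[u, v] (fun t => (n t)%:E)) ->
  Rintegral mu `[0, be] n = L ->
  Rintegral mu `]k%:R * be, k.+1%:R * be] n = L.
Proof.
move=> n0 hp intn hL.
have e1 : k%:R * be = 0 + k%:R * be by rewrite add0r.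
have e2 : k.+1%:R * be = be + k%:R * be by rewrite -natr1 mulrDl mul1r addrC.
rewrite e1 e2 Rint_shift //; last first.
  by rewrite -e1 -e2; apply: (@int_sub' n (k%:R * be) (k.+1%:R * be)); apply: intn.
rewrite (@eq_Rintegral _ _ _ mu _ n); last by move=> x _; rewrite n_per.
rewrite Rintegral_itv_obnd_cbnd // .
by apply: (@int_sub' n 0 be); apply: intn.
Qed.

Lemma Rint_0k (n : R -> R) (be L : R) (k : nat) : 0 <= be ->
  (forall t, 0 <= n t) -> (forall t, n (t + be) = n t) ->
  (forall u v : R, mu.-integrable `[u, v] (fun t => (n t)%:E)) ->
  Rintegral mu `[0, be] n = L ->
  Rintegral mu `[0, k%:R * be] n = k%:R * L.
Proof.
move=> be0 n0 hp intn hL; elim: k => [|k IH].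
  by rewrite !mul0r set_itv1 Rintegral_set1.
have := @Rint_split n (k%:R * be) (k.+1%:R * be).
rewrite mulr_ge0 ?ler_wpM2r ?ler_nat // => /(_ isT (intn _ _)).
rewrite IH (@Rint_period n be L k n0 hp intn hL) => h.
have -> : k.+1%:R * L = k%:R * L + L by rewrite -natr1 mulrDl mul1r.
lra.
Qed.

Lemma Rint_bound (n : R -> R) (be L : R) (m : nat) : 0 <= be ->
  (forall t, 0 <= n t) -> (forall t, n (t + be) = n t) ->
  (forall u v : R, mu.-integrable `[u, v] (fun t => (n t)%:E)) ->
  Rintegral mu `[0, be] n = L ->
  forall s t, 0 <= s <= t -> t <= m%:R * be ->
  Rintegral mu `]s, t] n <= m%:R * L.
Proof.
move=> be0 n0 hp intn hL s t /andP[s0 st] tT.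
rewrite -(@Rint_0k n be L m be0 n0 hp intn hL).
have t0 : 0 <= t by apply: le_trans st.
rewrite -(@Rint_split n s t) ?s0 ?st //.
have := @Rint_split n t (m%:R * be); rewrite t0 tT => /(_ isT (intn _ _)) h.
have h1 : 0 <= Rintegral mu `]t, m%:R * be] n by apply: Rintegral_ge0.
have h2 : 0 <= Rintegral mu `[0, s] n by apply: Rintegral_ge0.
apply: (le_trans (y := Rintegral mu `[0, t] n)); first by rewrite lerBlDr lerDl.
by rewrite -subr_ge0 h.
Qed.



Lemma ell_bound (s : R) : `|ell s| <= 1.
Proof.
rewrite /ell; case: ifPn => [s0|].
  by rewrite ger0_norm ?expR_ge0 // expR_le1 ltW // invr_lt0.
case: ifPn => [_ _|]; first by rewrite normr0.
rewrite -ltNge => s1 _; rewrite normrN ger0_norm ?expR_ge0 // expR_le1 ltW //.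
by rewrite invr_lt0 subr_lt0.
Qed.

Lemma delta_in (s : R) : delta s \in `[0, 1].
Proof.
rewrite /delta in_itv /= le_max lexx /= ge_max ler01 /= ge_min lexx orbT.
by [].
Qed.

Lemma F0_bound (F : R -> R) (k0 : R) : 0 <= k0 -> (forall s, derivable F s 1) ->
  exists M, 0 <= M /\ forall s, `|F0 F k0 s| <= M.
Proof.
move=> k00 dF.
have cF : {within `[0, 1], continuous F}.
  by apply: derivable_within_continuous => x _; exact: dF.
have [c1 c1i H1] := EVT_max ler01 cF.
have [c2 c2i H2] := EVT_min ler01 cF.
exists (`|F c1| + `|F c2| + k0); split.
  by rewrite !addr_ge0.
move=> s; rewrite /F0.
apply: (le_trans (ler_normD _ _)); apply: lerD.
  have h1 := H1 _ (delta_in s); have h2 := H2 _ (delta_in s).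
  have a1 : - `|F c2| <= F c2 by rewrite lerNl -normrN ler_norm.
  have a2 := normr_ge0 (F c1).
  have a3 : F c1 <= `|F c1| := ler_norm _.
  have a4 := normr_ge0 (F c2).
  rewrite ler_norml; apply/andP; split; lra.
rewrite normrM ger0_norm //.
by rewrite -[X in _ <= X]mulr1 ler_wpM2l // ell_bound.
Qed.


Lemma conclude (zeta : R -> R * R) (q0 : R * R) (T sg e c U p : R) :
  0 <= T -> 0 <= c -> (sg = 1 \/ sg = -1) -> (e = 1 \/ e = -1) ->
  cos p = - (sg * e) -> sin p = 0 ->
  norm2 q0 <= 1 -> 1 + c <= U ->
  (forall t, t \in `[0, T] -> U < sg * ((zeta t).2 + e * c * (zeta t).1)) ->
  (forall t, t \in `[0, T] -> zeta t <> q0) /\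
  (forall rho theta, is_angle_lift zeta q0 T rho theta -> rot_of theta T < 1).
Proof.
move=> T0 c0 hs he cp sp nq cU H.
have q1 : `|q0.1| <= 1.
  by rewrite -sqrtr_sqr; apply: le_trans nq; rewrite /norm2 ler_wsqrtr // lerDl sqr_ge0.
have q2 : `|q0.2| <= 1.
  by rewrite -sqrtr_sqr; apply: le_trans nq; rewrite /norm2 ler_wsqrtr // lerDr sqr_ge0.
have vq : sg * (q0.2 + e * c * q0.1) <= U.
  move: q1 q2; rewrite !ler_norml => /andP[a1 a2] /andP[b1 b2].
  by case: hs => ->; case: he => ->; nra.
split.
  by move=> t ht E; have := H t ht; rewrite E; lra.
move=> rho theta Hl; apply: (@rot_lt1 zeta q0 T rho theta p T0 _ Hl).
move=> t r ht r0 [E1 E2].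
have := H t ht.
have -> : (zeta t).1 = q0.1 + r * cos p by lra.
have -> : (zeta t).2 = q0.2 + r * sin p by lra.
rewrite cp sp mulr0 addr0.
have cr : 0 <= c * r by rewrite mulr_ge0 // ltW.
by case: hs => hs; case: he => he; rewrite hs he in vq *; nra.
Qed.

Lemma int_scale (f : R -> R) s t (a : R) :
  mu.-integrable `]s, t] (EFin \o f) ->
  mu.-integrable `]s, t] (EFin \o (fun x => a * f x)).
Proof.
move=> itf.
have B : mu.-integrable `]s,t] (fun x => (a%:E * (EFin \o f) x)%E) by apply: integrableZl.
by apply: eq_integrable B => //= x _; rewrite EFinM.
Qed.

Lemma int_comb (f1 f2 : R -> R) s t (a1 a2 : R) :
  mu.-integrable `]s, t] (EFin \o f1) -> mu.-integrable `]s, t] (EFin \o f2) ->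
  mu.-integrable `]s, t] (EFin \o (fun x => a1 * f1 x + a2 * f2 x)).
Proof.
move=> i1 i2.
have C : mu.-integrable `]s,t] ((EFin \o (fun x => a1 * f1 x)) \+ (EFin \o (fun x => a2 * f2 x))).
  by apply: integrableD => //; apply: int_scale.
by apply: eq_integrable C => //= x _; rewrite EFinD.
Qed.

Lemma Rint_comb (f1 f2 : R -> R) s t (a1 a2 : R) :
  mu.-integrable `]s, t] (EFin \o f1) -> mu.-integrable `]s, t] (EFin \o f2) ->
  Rintegral mu `]s, t] (fun x => a1 * f1 x + a2 * f2 x) =
  a1 * Rintegral mu `]s, t] f1 + a2 * Rintegral mu `]s, t] f2.
Proof.
move=> i1 i2.
rewrite RintegralD //; try by apply: int_scale.
by rewrite !RintegralZl.
Qed.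

Lemma cont_comb (f1 f2 : R -> R) (a b : R) : continuous f1 -> continuous f2 ->
  continuous (fun t => a * (f1 t + b * f2 t)).
Proof.
move=> c1 c2 x.
apply: cvgM; first exact: cvg_cst.
apply: cvgD; first exact: c1.
apply: cvgM; first exact: cvg_cst.
exact: c2.
Qed.

Lemma norm2_le (z : R * R) : norm2 z <= `|z.1| + `|z.2|.
Proof.
rewrite /norm2 -[X in _ <= X]ger0_norm ?addr_ge0 // -sqrtr_sqr ler_wsqrtr //.
rewrite sqrrD !real_normK ?num_real //.
have h : 0 <= `|z.1| * `|z.2| *+ 2 by rewrite mulrn_wge0 // mulr_ge0.
lra.
Qed.

End Aux.

Theorem lemma2 (R : realType) (g : R) (F : R -> R) (a k0 beta : R) (m : nat) (L : R) :
  0 < g ->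
  (forall s, derivable F s 1) -> continuous (derive1 F) ->
  0 < a < 1 -> F 0 = 0 -> F a = 0 -> F 1 = 0 ->
  (forall s, s < 0 -> 0 < F s) -> (forall s, a < s < 1 -> 0 < F s) ->
  (forall s, 0 < s < a -> F s < 0) -> (forall s, 1 < s -> F s < 0) ->
  0 < k0 -> k0 <= c0 F ->
  0 < beta -> (1 <= m)%N ->
  exists R0 : R, 0 < R0 /\
    forall n : R -> R,
      (forall t, 0 <= n t) ->
      (forall t, n (t + beta) = n t) ->
      (forall u v : R, lebesgue_measure.-integrable `[u, v] (fun t => (n t)%:E)) ->
      Rintegral lebesgue_measure `[0, beta] n = L ->
    forall (z2 q0 : R * R), R0 <= norm2 z2 -> norm2 q0 <= 1 ->
    forall zeta : R -> R * R,
      is_solution g n F k0 zeta -> zeta 0 = z2 ->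
      (forall t, t \in `[0, m%:R * beta] -> zeta t <> q0) /\
      (forall rho theta : R -> R,
         is_angle_lift zeta q0 (m%:R * beta) rho theta ->
         rot_of theta (m%:R * beta) < 1).
Proof.
move=> hg dF cdF ha F0_ Fa F1 Fneg Fpos1 Fneg1 Fneg2 hk0 hk0c hbeta hm.
have [M [M0 HM]] := @F0_bound R F k0 (ltW hk0) dF.
set c := Num.sqrt g.
have c0 : 0 < c by rewrite sqrtr_gt0.
have cc : c * c = g by rewrite -expr2 sqr_sqrtr // ltW.
set T := m%:R * beta.
have T0 : 0 < T by rewrite mulr_gt0 // ltr0n.
set Lp := Num.max L 0.
have Lp0 : 0 <= Lp by rewrite le_max lexx orbT.
have LLp : L <= Lp by rewrite le_max lexx.
set NN := m%:R * Lp.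
have NN0 : 0 <= NN by rewrite mulr_ge0.
set K := M * NN.
have K0 : 0 <= K by rewrite mulr_ge0.
set C := 4 * K + 2.
set N := (Num.truncn (2 * c * T)).+1.
have N0 : (0 < N)%N by [].
have cd : c * (T / N%:R) <= 1/2.
  have h := truncnS_gt (2 * c * T).
  have Npos : 0 < N%:R :> R by rewrite ltr0n.
  rewrite mulrA ler_pdivrMr //; rewrite -/N in h; lra.
set U := 1 + c.
set W := U + 1.
set A := Num.max (U + K + 1) (2 ^+ N * (W + C) - C).
have AU : U + K + 1 <= A by rewrite le_max lexx.
have AW : 2 ^+ N * (W + C) - C <= A by rewrite le_max lexx orbT.
have A0 : 0 < A by rewrite /U in AU; lra.
have Ac0 : 0 < A / c by rewrite divr_gt0.
exists (A + A / c + 1); split; first by lra.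
move=> n n0 hper hint hL z2 q0 hz2 hq0 zeta hsol hz0.
move: hsol; rewrite /is_solution /= => -[cx [cy [iy [irhs [ex ey]]]]].
pose Xf := fun t => (zeta t).1.
pose Yf := fun t => (zeta t).2.
pose rhs := fun t => - hfun g n F k0 t (zeta t).1.
have intn : forall s t, lebesgue_measure.-integrable `]s, t] (EFin \o n).
  by move=> s t; apply: int_sub'; exact: hint.
have Nb : forall s t, 0 <= s <= t -> t <= T -> Rintegral lebesgue_measure `]s, t] n <= NN.
  move=> s t hst tT.
  apply: le_trans (@Rint_bound R n beta L m (ltW hbeta) n0 hper hint hL s t hst tT) _.
  by rewrite ler_wpM2l.
have incX : forall s t, 0 <= s <= t ->
    Xf t - Xf s = Rintegral lebesgue_measure `]s, t] Yf.
  move=> s t hst; have /andP[s0 st] := hst; have t0 := le_trans s0 st.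
  rewrite /Xf (ex t) (ex s) /oint t0 s0 -(@Rint_split R Yf s t hst (iy 0 t)).
  by rewrite opprD addrACA subrr add0r.
have incY : forall s t, 0 <= s <= t ->
    Yf t - Yf s = Rintegral lebesgue_measure `]s, t] rhs.
  move=> s t hst; have /andP[s0 st] := hst; have t0 := le_trans s0 st.
  rewrite /Yf (ey t) (ey s) /oint t0 s0 -(@Rint_split R rhs s t hst (irhs 0 t)).
  by rewrite opprD addrACA subrr add0r.
have key : forall sg e p, (sg = 1 \/ sg = -1) -> (e = 1 \/ e = -1) ->
    cos p = - (sg * e) -> sin p = 0 ->
    A <= sg * ((zeta 0).2 + e * c * (zeta 0).1) ->
    (forall t, t \in `[0, T] -> zeta t <> q0) /\
    (forall rho theta, is_angle_lift zeta q0 T rho theta -> rot_of theta T < 1).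
  move=> sg e p hs he cp sp hA.
  apply: (@conclude R zeta q0 T sg e c U p (ltW T0) (ltW c0) hs he cp sp hq0 (lexx _)).
  pose v := fun t => sg * (Yf t + e * c * Xf t).
  pose f := fun t => sg * rhs t + (sg * e * c) * Yf t.
  have cv : continuous v := @cont_comb R Yf Xf sg (e * c) cy cx.
  have intf : forall s t, lebesgue_measure.-integrable `]s, t] (EFin \o f).
    move=> s t; apply: int_comb; apply: int_sub'; [exact: irhs | exact: iy].
  have incv : forall s t, 0 <= s <= t -> t <= T ->
      v t - v s = Rintegral lebesgue_measure `]s, t] f.
    move=> s t hst _.
    rewrite (@Rint_comb R rhs Yf s t sg (sg * e * c)); last 2 first.
      by apply: int_sub'; exact: irhs.
      by apply: int_sub'; exact: iy.
    rewrite -incX // -incY // /v; ring.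
  have hf : forall t, f t = e * c * v t - sg * (n t * F0 F k0 (Xf t)).
    move=> t; rewrite /f /v /rhs /hfun /Xf -cc.
    by case: he => ->; ring.
  have hP : forall t, `|sg * (n t * F0 F k0 (Xf t))| <= M * n t.
    move=> t; rewrite normrM normrM (ger0_norm (n0 t)).
    have -> : `|sg| = 1 by case: hs => ->; rewrite ?normrN normr1.
    by rewrite mul1r mulrC ler_wpM2r.
  have hA' : A <= v 0 := hA.
  have PB : forall t, - (M * n t) <= sg * (n t * F0 F k0 (Xf t)) <= M * n t.
    by move=> t; rewrite -ler_norml.
  case: (he) => he1; move=> t; rewrite in_itv /= => ht.
  - apply: (@growth R v f n T M NN U cv M0 NN0 _ intf intn _ _ _ _ t ht).
    + by rewrite /U; lra.
    + by move=> t' /andP[t0 tT]; apply: incv => //; rewrite lexx t0.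
    + by move=> t' /andP[t0 tT]; apply: Nb => //; rewrite lexx t0.
    + move=> t' vt; rewrite hf he1 mul1r.
      have h1 := mulr_ge0 (ltW c0) vt.
      have /andP[h2 h3] := PB t'.
      lra.
    + rewrite -/K; lra.
  - have := @decay R v f n T M NN c W N cv M0 NN0 (ltW c0) T0 N0 cd intf intn incv Nb _ _ _ _ t ht.
    have hW : U < W by rewrite /W; lra.
    move=> h; apply: (lt_le_trans hW); apply: h.
    + move=> t' vt; rewrite hf he1.
      have h1 := mulr_ge0 (ltW c0) vt.
      have /andP[h2 h3] := PB t'.
      lra.
    + move=> t'; rewrite hf he1.
      have /andP[h2 h3] := PB t'.
      lra.
    + by rewrite /W /U; lra.
    + by rewrite -/K -/C; apply: le_trans AW hA'.
rewrite -hz0 in hz2.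
have nle := @norm2_le R (zeta 0).
set x0 := (zeta 0).1 in key nle; set y0 := (zeta 0).2 in key nle.
have [h1|h1] := lerP A (1 * (y0 + 1 * c * x0)).
  by apply: (key 1 1 pi) => //; [left|left|rewrite cospi mulr1| rewrite sinpi].
have [h2|h2] := lerP A (-1 * (y0 + 1 * c * x0)).
  by apply: (key (-1) 1 0) => //; [right|left| rewrite cos0 mulr1 opprK | rewrite sin0].
have [h3|h3] := lerP A (1 * (y0 + -1 * c * x0)).
  by apply: (key 1 (-1) 0) => //; [left|right| rewrite cos0 mul1r opprK | rewrite sin0].
have [h4|h4] := lerP A (-1 * (y0 + -1 * c * x0)).
  by apply: (key (-1) (-1) pi) => //; [right|right| rewrite cospi mulrNN mulr1 | rewrite sinpi].
exfalso.
have cx1 : c * x0 < A by lra.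
have cx2 : - A < c * x0 by lra.
have hy : `|y0| < A by rewrite ltr_norml; apply/andP; split; lra.
have hx : `|x0| < A / c.
  rewrite ltr_norml; apply/andP; split.
    by rewrite -mulNr ltr_pdivrMr // mulrC.
  by rewrite ltr_pdivlMr // mulrC.
lra.
Qed.
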